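(* Let $W\in\mathbb{D}_n$ be a Dale matrix with excitatory neurons $\mathcal{E}$ and inhibitory neurons $\mathcal{I}$. Let $m=|\mathcal{E}|+1$, identify the first $m-1$ indices of $[m]$ with $\mathcal{E}$ and let index $m$ be a single inhibitory neuron. Let $W'\in\mathbb{D}_m$ be any Dale matrix (with excitatory set $\mathcal{E}$ and inhibitory set $\{m\}$) such that $W'_{\mathcal{E}}=W_{\mathcal{E}}$ (the principal submatrices on $\mathcal{E}$ agree) and, for all $i\in\mathcal{E}$, $$W'_{im}=\begin{cases}-1,&\text{if there is } j\in\mathcal{I}\text{ with } W_{ij}\neq 0,\\ 0,&\text{if } W_{ij}=0 \text{ for all } j\in\mathcal{I}.\end{cases}$$ Assume both $W$ and $W'$ satisfy the Ground Assumption. Then $\mathcal{C}(W)=\mathcal{C}(W')$.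
   Context: Threshold-linear network: for $W\in\mathbb{R}^{n\times n}$ and $b\in\mathbb{R}^n$, the dynamics are $\dot x_i=-x_i+[\sum_{j=1}^n W_{ij}x_j+b_i]_+$, $i=1,\dots,n$, where $[y]_+=\max(0,y)$. A fixed point is $x^*\in\mathbb{R}^n$ with $x^*=[Wx^*+b]_+$ (componentwise). A Dale matrix $W\in\mathbb{D}_n$ is an $n\times n$ real matrix together with a partition $[n]=\mathcal{E}\sqcup\mathcal{I}$ into excitatory and inhibitory neurons such that $W_{ii}=0$ for all $i$, $W_{ji}\ge 0$ for all $j$ whenever $i\in\mathcal{E}$, and $W_{ji}\le 0$ for all $j$ whenever $i\in\mathcal{I}$. Ground Assumption: for every nonempty $\sigma\subset[n]$ the principal submatrix $(I-W)_\sigma$ is nonsingular. For $x\in\mathbb{R}^n_{\ge0}$, its excitatory support is $\mathrm{supp}_+x=\{i\in\mathcal{E}: x_i>0\}$. The combinatorial code of $W$ is $\mathcal{C}(W)=\{\mathrm{supp}_+x^*\;:\; b\in\mathbb{R}^n_{\ge0},\ x^*\in\mathbb{R}^n_{\ge 0}\text{ a fixed point of the network }(W,b)\}$. For $\sigma\subset[n]$, $A_\sigma$ denotes the principal submatrix of $A$ on rows and columns $\sigma$. *)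

(* Defs.v *)
From HB Require Import structures.
From mathcomp Require Import all_boot all_order all_algebra.
From mathcomp Require Import reals.
Set Implicit Arguments. Unset Strict Implicit. Unset Printing Implicit Defensive.
Import Order.TTheory GRing.Theory Num.Theory.
Local Open Scope ring_scope.

Section Defs.
Variable R : realType.

Definition dale (n : nat) (W : 'M[R]_n) (E : {set 'I_n}) : Prop :=
  [/\ forall i, W i i = 0,
      forall i j, i \in E -> 0 <= W j i
    & forall i j, i \notin E -> W j i <= 0].

Definition principal_submx (n : nat) (A : 'M[R]_n) (sigma : {set 'I_n})
  : 'M[R]_#|sigma| :=
  \matrix_(i < #|sigma|, j < #|sigma|)
     A (@enum_val _ (mem sigma) i) (@enum_val _ (mem sigma) j).

Definition ground_assumption (n : nat) (W : 'M[R]_n) : Prop :=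
  forall sigma : {set 'I_n}, sigma != set0 ->
    principal_submx (1%:M - W) sigma \in unitmx.

Definition relu (y : R) : R := Num.max 0 y.

Definition tln_fixed_point (n : nat) (W : 'M[R]_n) (b x : 'cV[R]_n) : Prop :=
  forall i, x i 0 = relu ((W *m x) i 0 + b i 0).

Definition supp_plus (n : nat) (E : {set 'I_n}) (x : 'cV[R]_n) : {set 'I_n} :=
  [set i in E | 0 < x i 0].

Definition in_code (n : nat) (W : 'M[R]_n) (E : {set 'I_n}) (S : {set 'I_n})
  : Prop :=
  exists b x : 'cV[R]_n,
    (forall i, 0 <= b i 0) /\ (forall i, 0 <= x i 0) /\
    tln_fixed_point W b x /\ S = supp_plus E x.

End Defs.

(* Main.v *)
Require Import Defs.
From HB Require Import structures.
From mathcomp Require Import all_boot all_order all_algebra.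
From mathcomp Require Import reals.
From mathcomp Require Import ring lra.
Import Order.TTheory GRing.Theory Num.Theory.
Set Implicit Arguments. Unset Strict Implicit. Unset Printing Implicit Defensive.
Local Open Scope ring_scope.

Section Aux.
Variable R : realType.

Definition Pcode (k : nat) (A : 'I_k -> 'I_k -> R) (ni : 'I_k -> Prop)
  (S : {set 'I_k}) : Prop :=
  exists y : 'I_k -> R,
    (forall l, (l \in S -> 0 < y l) /\ (l \notin S -> y l = 0)) /\
    forall i, ni i -> \sum_l A i l * y l <= y i.

Lemma Pcode_ext k (A A' : 'I_k -> 'I_k -> R) (ni ni' : 'I_k -> Prop) S :
  (forall i l, A i l = A' i l) -> (forall i, ni i <-> ni' i) ->
  Pcode A ni S -> Pcode A' ni' S.
Proof.
move=> hA hn [y [hy hs]]; exists y; split => // i /hn /hs.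
by under eq_bigr do rewrite hA.
Qed.

Lemma split_sum n k (W : 'M[R]_n) (E : {set 'I_n}) (f : 'I_k -> 'I_n)
  (x : 'cV[R]_n) a :
  injective f -> E = f @: [set: 'I_k] ->
  (forall j, j \notin E -> W a j = 0) ->
  (W *m x) a 0 = \sum_l W a (f l) * x (f l) 0.
Proof.
move=> finj hE hz; rewrite mxE (bigID (mem E)) /=.
rewrite [X in _ + X]big1 ?addr0; last by move=> j /hz ->; rewrite mul0r.
rewrite hE big_imset /=; last by move=> u v _ _; apply finj.
by apply: eq_bigl => l; rewrite inE.
Qed.

Lemma code_char n k (W : 'M[R]_n) (E : {set 'I_n}) (f : 'I_k -> 'I_n) :
  injective f -> E = f @: [set: 'I_k] -> dale W E ->
  forall S : {set 'I_k}, in_code W E (f @: S) <->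
    Pcode (fun i l => W (f i) (f l))
          (fun i => forall j, j \notin E -> W (f i) j = 0) S.
Proof.
move=> finj hE [hd hpos hneg] S; split.
  move=> [b [x [hb [hx [hfp hS]]]]].
  exists (fun l => x (f l) 0); split.
    move=> l; split.
      move=> lS; have : f l \in f @: S by rewrite mem_imset.
      by rewrite hS inE => /andP[].
    move=> lS; apply/eqP; rewrite eq_le hx andbT leNgt; apply/negP => hp.
    have : f l \in supp_plus E x by rewrite inE hp andbT hE imset_f.
    by rewrite -hS mem_imset // (negbTE lS).
  move=> i hi; rewrite -(split_sum x finj hE hi) hfp /relu.
  by rewrite le_max lerDl hb orbT.
move=> [y [hy hA]].
have y0 : forall l, 0 <= y l.
  move=> l; case: (boolP (l \in S)) => lS.
    by apply: ltW; apply (hy l).1.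
  by rewrite (hy l).2.
have fE : forall l, f l \in E by move=> l; rewrite hE imset_f.
pose e : 'cV[R]_n := \col_j ((j \notin E)%:R : R).
pose x0 : 'cV[R]_n := \col_j \sum_l (f l == j)%:R * y l.
have x0f : forall i, x0 (f i) 0 = y i.
  move=> i; rewrite mxE (bigD1 i) //= eqxx mul1r big1 ?addr0 //.
  by move=> l /negbTE hl; rewrite (inj_eq finj) hl mul0r.
have x0n : forall j, j \notin E -> x0 j 0 = 0.
  move=> j jE; rewrite mxE big1 // => l _.
  have -> : (f l == j) = false.
    by apply/negbTE; apply/eqP => hj; move: jE; rewrite -hj fE.
  by rewrite mul0r.
have x00 : forall j, 0 <= x0 j 0.
  move=> j; rewrite mxE; apply: sumr_ge0 => l _; apply: mulr_ge0; [exact: ler0n | exact: y0].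
have Wx0 : forall a, (W *m x0) a 0 = \sum_l W a (f l) * y l.
  move=> a; rewrite mxE.
  under eq_bigr do rewrite mxE big_distrr.
  rewrite exchange_big; apply: eq_bigr => l _ /=.
  rewrite (bigD1 (f l)) //= eqxx mul1r big1 ?addr0 //.
  by move=> j /negbTE hj; rewrite eq_sym hj mul0r mulr0.
have We0 : forall j, (W *m e) j 0 <= 0.
  move=> j; rewrite mxE; apply: sumr_le0 => j' _; rewrite mxE.
  case: (boolP (j' \in E)) => hj' /=; first by rewrite mulr0.
  by rewrite mulr1 hneg.
pose g := fun j => x0 j 0 - (W *m x0) j 0.
pose d := fun j => e j 0 - (W *m e) j 0.
have d0 : forall j, 0 <= d j.
  move=> j; rewrite /d subr_ge0; apply: le_trans (We0 j) _.
  by rewrite mxE ler0n.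
have gd : forall j, d j = 0 -> 0 <= g j.
  move=> j; rewrite /d => hdj.
  have hej : e j 0 = 0.
    have h1 := We0 j; have h2 : 0 <= e j 0 by rewrite mxE ler0n.
    lra.
  have hWe : (W *m e) j 0 = 0.
    have h1 := We0 j; lra.
  have jE : j \in E.
    by move: hej; rewrite mxE; case: (j \in E) => //= /eqP; rewrite oner_eq0.
  move: (jE); rewrite hE => /imsetP [i _ hji]; subst j.
  rewrite /g x0f Wx0 subr_ge0; apply: hA => j' j'E.
  have := @psumr_eq0P _ _ predT (fun j'' => - (W (f i) j'' * e j'' 0)) _ _ j' isT.
  rewrite mxE j'E mulr1 => h; apply/eqP; rewrite -oppr_eq0 h //.
    move=> u _; rewrite oppr_ge0 mxE; case: (boolP (u \in E)) => hu /=.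
      by rewrite mulr0.
    by rewrite mulr1 hneg.
  by rewrite sumrN; move: hWe; rewrite mxE => ->; rewrite oppr0.
pose M := \sum_j `|g j| / d j.
have M0 : 0 <= M by apply: sumr_ge0 => j _; apply: divr_ge0.
pose x : 'cV[R]_n := x0 + M *: e.
have xe : forall j, x j 0 = x0 j 0 + M * e j 0 by move=> j; rewrite !mxE.
have Wxe : forall j, (W *m x) j 0 = (W *m x0) j 0 + M * (W *m e) j 0.
  by move=> j; rewrite mulmxDr -scalemxAr !mxE.
have key : forall j, (W *m x) j 0 <= x j 0.
  move=> j; rewrite xe Wxe -subr_ge0.
  have -> : x0 j 0 + M * e j 0 - ((W *m x0) j 0 + M * (W *m e) j 0) = g j + M * d j.
    by rewrite /g /d; ring.
  have [hdj|hdj] := eqVneq (d j) 0.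
    by rewrite hdj mulr0 addr0 gd.
  have dpos : 0 < d j by rewrite lt_def hdj d0.
  have : `|g j| / d j <= M.
    rewrite /M (bigD1 j) //= lerDl; apply: sumr_ge0 => u _; exact: divr_ge0.
  rewrite ler_pdivrMr // => hM.
  have hg : - g j <= `|g j| by rewrite -normrN ler_norm.
  lra.
have x0' : forall j, 0 <= x j 0.
  move=> j; rewrite xe; apply: addr_ge0 => //; apply: mulr_ge0 => //.
  by rewrite mxE ler0n.
have bE : forall j, (x - W *m x) j 0 = x j 0 - (W *m x) j 0.
  by move=> j; rewrite !mxE.
exists (x - W *m x), x; split; last split; last split.
- by move=> j; rewrite bE subr_ge0 key.
- exact: x0'.
- move=> j; rewrite bE.
  rewrite addrC subrK /relu; apply/esym/max_idPr; exact: x0'.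
- apply/setP => j; rewrite inE.
  case: (boolP (j \in E)) => jE /=.
    move: (jE); rewrite hE => /imsetP [i _ ->].
    rewrite mem_imset // xe x0f mxE (fE i) /= mulr0 addr0.
    case: (boolP (i \in S)) => iS; first by rewrite (hy i).1.
    by rewrite (hy i).2 // ltxx.
  apply/negbTE; apply/negP => /imsetP [i _ hj]; move: jE; by rewrite hj fE.
Qed.

End Aux.

Theorem mainTheorem1 (R : realType) (n k : nat)
  (W : 'M[R]_n) (E : {set 'I_n}) (f : 'I_k -> 'I_n)
  (W' : 'M[R]_k.+1) :
  injective f ->
  E = f @: [set: 'I_k] ->
  dale W E ->
  dale W' [set i : 'I_k.+1 | i != ord_max] ->
  (forall i j : 'I_k,
     W' (widen_ord (leqnSn k) i) (widen_ord (leqnSn k) j) = W (f i) (f j)) ->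
  (forall i : 'I_k,
     W' (widen_ord (leqnSn k) i) ord_max =
       if [exists j : 'I_n, (j \notin E) && (W (f i) j != 0)] then -1 else 0) ->
  ground_assumption W ->
  ground_assumption W' ->
  forall S : {set 'I_k},
    in_code W E (f @: S) <->
    in_code W' [set i : 'I_k.+1 | i != ord_max] (widen_ord (leqnSn k) @: S).
Proof.
move=> finj hE hW hW' hEE hEI GA GA' S.
have wE : [set i : 'I_k.+1 | i != ord_max] = widen_ord (leqnSn k) @: [set: 'I_k].
  apply/setP => j; rewrite inE; apply/idP/imsetP.
    move=> hj; have hlt : (j < k)%N.
      have := ltn_ord j; rewrite ltnS leq_eqVlt => /orP [/eqP h|//].
      move: hj; have -> : j = ord_max by apply: val_inj.
      by rewrite eqxx.
    by exists (Ordinal hlt) => //; apply: val_inj.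
  move=> [i _ ->]; apply/eqP => /(congr1 val) /= h.
  by move: (ltn_ord i); rewrite h ltnn.
have winj : injective (widen_ord (leqnSn k)).
  by move=> a b /(congr1 val) /= h; apply: val_inj.
rewrite (code_char finj hE hW) (code_char winj wE hW').
have niE : forall i, (forall j, j \notin E -> W (f i) j = 0) <->
   (forall j, j \notin [set i : 'I_k.+1 | i != ord_max] ->
      W' (widen_ord (leqnSn k) i) j = 0).
  move=> i; split.
    move=> h j; rewrite inE negbK => /eqP ->; rewrite hEI.
    case: existsP => // [[j' /andP [hj' hne]]].
    by rewrite (h j' hj') eqxx in hne.
  move=> h j hj; have := h ord_max; rewrite inE eqxx /= hEI => /(_ isT).
  case: existsP => [_ /eqP | hn _]; first by rewrite oppr_eq0 oner_eq0.
  have [//|hne] := eqVneq (W (f i) j) 0; exfalso; apply: hn; exists j; by rewrite hj hne.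
split; apply: Pcode_ext => i.
- by move=> l; rewrite hEE.
- exact: niE.
- by move=> l; rewrite hEE.
- by split; apply niE.
Qed.
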